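(* For any $S_1,S,T_1,T\in\mathfrak S_1(\mathbb T)$ with $S_1\le S$ and $T_1\le T$, $$d(S-S_1,T-T_1)\le d(S_1,T_1)+d(S,T).$$
   Context: A rigged subset $S$ of a set $X$ assigns to each $x$ a multiplicity $\mathrm{mult}(x;S)\in\{0,1,\dots,\infty\}$; $S\le T$ means $\mathrm{mult}(x;S)\le\mathrm{mult}(x;T)$ for all $x$; $S\pm T$ are defined by adding/subtracting multiplicities (difference when $T\le S$). An enumeration is a sequence in which each $x$ appears $\mathrm{mult}(x;S)$ times. $\mathfrak S_\infty(\mathbb T)$ consists of countable rigged subsets of the unit circle $\mathbb T$ (arc-length metric) in which $1$ has multiplicity $\infty$ and with no other accumulation point (counting multiplicity); $d(S,T)=\inf\sum_j\mathrm{dist}(s_j,t_j)$ over enumerations of $S,T$; $\mathfrak S_1(\mathbb T)=\{S: d(S,\mathbf 1)<\infty\}$, $\mathbf 1$ being $1$ with infinite multiplicity. The point $1$ is always regarded as having infinite multiplicity (so differences are again in $\mathfrak S_1(\mathbb T)$). *)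

(* Defs.v *)
From HB Require Import structures.
From mathcomp Require Import all_boot all_order all_algebra.
From mathcomp Require Import all_classical all_reals all_analysis.
Set Implicit Arguments. Unset Strict Implicit. Unset Printing Implicit Defensive.
Import Order.TTheory GRing.Theory Num.Theory.
Import numFieldNormedType.Exports.
Local Open Scope classical_set_scope.
Local Open Scope ring_scope.

(* The unit circle T, parametrized by the angle theta in [0, 2 pi):
   the point is exp(i theta); the point 1 is theta = 0. *)
Record circ (R : realType) := Circ {
  ang : R;
  ang_ge0 : 0 <= ang;
  ang_lt : ang < 2 * pi }.

Definition circ1 (R : realType) : circ R :=
  @Circ R 0 (lexx 0) (mulr_gt0 (ltr0Sn R 1) (pi_gt0 R)).

Definition cdist (R : realType) (x y : circ R) : R :=
  Num.min `|ang x - ang y| (2 * pi - `|ang x - ang y|).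

(* multiplicities in {0,1,...,oo}: Some n = n, None = oo *)
Definition mlt := option nat.

Definition mlt_le (a b : mlt) : Prop :=
  match a, b with
  | _, None => True
  | None, Some _ => False
  | Some m, Some n => (m <= n)%N
  end.

Definition mlt_sub (a b : mlt) : mlt :=
  match a, b with
  | None, _ => None
  | Some m, Some n => Some (m - n)%N
  | Some _, None => Some 0%N
  end.

(* A rigged subset of the circle: its multiplicity function. *)
Definition rigged (R : realType) := circ R -> mlt.

Definition rle (R : realType) (S T : rigged R) : Prop :=
  forall x, mlt_le (S x) (T x).

(* Difference S - T (used when T <= S); the point 1 is always regarded
   as having infinite multiplicity. *)
Definition rsub (R : realType) (S T : rigged R) : rigged R :=
  fun x => if pselect (x = circ1 R) then None else mlt_sub (S x) (T x).

Definition rone (R : realType) : rigged R :=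
  fun x => if pselect (x = circ1 R) then None else Some 0%N.

(* S in S_oo(T): countable, 1 has multiplicity oo, and no other
   accumulation point counting multiplicity: every x <> 1 has a
   neighbourhood of finite total multiplicity. *)
Definition in_Soo (R : realType) (S : rigged R) : Prop :=
  [/\ countable [set x | S x <> Some 0%N],
      S (circ1 R) = None &
      forall x, x <> circ1 R -> exists2 r : R, 0 < r &
        finite_set [set y | cdist x y < r /\ S y <> Some 0%N] /\
        (forall y, cdist x y < r -> S y <> None)].

Definition occurs (R : realType) (s : nat -> circ R) (x : circ R) (m : mlt)
  : Prop :=
  match m with
  | Some n => exists l : seq nat, [/\ uniq l, size l = n &
                 forall j, s j = x <-> j \in l]
  | None => forall N, exists2 j, (N <= j)%N & s j = x
  end.

Definition enumeration (R : realType) (S : rigged R) (s : nat -> circ R)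
  : Prop := forall x, occurs s x (S x).

Local Open Scope ereal_scope.

Definition rdist (R : realType) (S T : rigged R) : \bar R :=
  ereal_inf [set v | exists s t, [/\ enumeration S s, enumeration T t &
     v = \sum_(j <oo) (cdist (s j) (t j))%:E]].

Definition in_S1 (R : realType) (S : rigged R) : Prop :=
  in_Soo S /\ rdist S (@rone R) < +oo.

(* Main.v *)
Require Import Defs.
From HB Require Import structures.
From mathcomp Require Import all_boot all_order all_algebra.
From mathcomp Require Import all_classical all_reals all_analysis.
From mathcomp Require Import lra.
Set Implicit Arguments. Unset Strict Implicit. Unset Printing Implicit Defensive.
Import Order.TTheory GRing.Theory Num.Theory.
Local Open Scope ring_scope.


Section Cdist.
Variable R : realType.

Lemma cdist_ge0 (x y : circ R) : 0 <= cdist x y.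
Proof.
rewrite /cdist; case: x y => a a0 a1 [b b0 b1] /=.
have p0 := pi_gt0 R.
case: (ltP `|a - b| (2 * pi - `|a - b|)) => _; first exact: normr_ge0.
case: (lerP 0 (a - b)) => h; [rewrite ger0_norm // | rewrite ltr0_norm //]; lra.
Qed.

Lemma cdistxx (x : circ R) : cdist x x = 0.
Proof.
rewrite /cdist subrr normr0 subr0.
have p0 := pi_gt0 R.
case: ltP => //; lra.
Qed.

Lemma cdistC (x y : circ R) : cdist x y = cdist y x.
Proof. by rewrite /cdist distrC. Qed.

Lemma min_cases (x y : R) :
  (Num.min x y = x /\ x <= y) \/ (Num.min x y = y /\ y <= x).
Proof.
rewrite minr_absE; case: (lerP x y) => h.
  by left; split => //; lra.
right; split; lra.
Qed.

Lemma cdist_triangle (x y z : circ R) : cdist x z <= cdist x y + cdist y z.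
Proof.
rewrite /cdist; case: x y z => a a0 a1 [b b0 b1] [c c0 c1] /=.
have p0 := pi_gt0 R.
case: (min_cases `|a - c| (2 * pi - `|a - c|)) => [[-> e3]|[-> e3]];
case: (min_cases `|a - b| (2 * pi - `|a - b|)) => [[-> e1]|[-> e1]];
case: (min_cases `|b - c| (2 * pi - `|b - c|)) => [[-> e2]|[-> e2]];
move: e1 e2 e3;
case: (lerP 0 (a - b)) => h1; (try rewrite (ger0_norm h1)); (try rewrite (ltr0_norm h1));
case: (lerP 0 (b - c)) => h2; (try rewrite (ger0_norm h2)); (try rewrite (ltr0_norm h2));
case: (lerP 0 (a - c)) => h3; (try rewrite (ger0_norm h3)); (try rewrite (ltr0_norm h3));
move=> e1 e2 e3; lra.
Qed.

End Cdist.


Section Series.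
Variable R : realType.

Lemma pigeon (g : nat -> nat) (F : seq nat) :
  (forall a b, g a = g b -> a = b) -> exists n, g n \notin F.
Proof.
move=> ginj; apply/not_existsP => /= H.
have sub : {subset map g (iota 0 (size F).+1) <= F}.
  move=> x /mapP [n _ ->]; have := H n; by case: (g n \in F).
have := uniq_leq_size _ sub.
rewrite map_inj_uniq ?iota_uniq; last by move=> a b /ginj.
by rewrite size_map size_iota ltnn => /(_ isT).
Qed.

Lemma sum_uniq_le_sum (f : nat -> R) (L : seq nat) :
  (forall j, 0 <= f j) -> uniq L ->
  exists M, \sum_(j <- L) f j <= \sum_(0 <= j < M) f j.
Proof.
move=> f0 uL; exists (\max_(j <- L) j).+1.
have sub : forall j, j \in L -> j \in index_iota 0 (\max_(j <- L) j).+1.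
  move=> j jL; rewrite mem_index_iota leq0n /= ltnS.
  exact: (leq_bigmax_seq _ jL).
have pe : perm_eq L [seq j <- index_iota 0 (\max_(j <- L) j).+1 | j \in L].
  apply: uniq_perm => //; first by rewrite filter_uniq // iota_uniq.
  by move=> j; rewrite mem_filter; case jL: (j \in L) => //=; rewrite sub.
rewrite (perm_big _ pe) big_filter /= big_mkcond /=.
apply: ler_sum => j _; case: ifP => // _; exact: f0.
Qed.

Lemma sum_uniq_le_series (f : nat -> R) (L : seq nat) :
  (forall j, 0 <= f j) -> uniq L ->
  ((\sum_(j <- L) f j)%:E <= \sum_(j <oo) (f j)%:E)%E.
Proof.
move=> f0 uL; have [M hM] := sum_uniq_le_sum f0 uL.
apply: (@le_trans _ _ (\sum_(0 <= j < M) f j)%:E); first by rewrite lee_fin.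
rewrite -sumEFin; apply: nneseries_lim_ge => n _ _; rewrite lee_fin; exact: f0.
Qed.

Lemma series_le_bound (f : nat -> R) (M : \bar R) :
  (forall j, 0 <= f j) -> (forall N, ((\sum_(0 <= j < N) f j)%:E <= M)%E) ->
  (\sum_(j <oo) (f j)%:E <= M)%E.
Proof.
move=> f0 H; apply: lime_le.
  by apply: is_cvg_nneseries => n _ _; rewrite lee_fin.
by apply: nearW => N; rewrite sumEFin; exact: H.
Qed.

Lemma finite_tail (f : nat -> R) :
  (forall j, 0 <= f j) -> (\sum_(j <oo) (f j)%:E < +oo)%E ->
  forall e, 0 < e -> exists F : seq nat, forall j, e <= f j -> j \in F.
Proof.
move=> f0 fin e e0; apply: contrapT => H.
have H' : forall F : seq nat, exists j, e <= f j /\ j \notin F.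
  move=> F; apply: contrapT => H1; apply: H; exists F => j ej.
  apply: contrapT => jF; apply: H1; exists j; split => //; exact/negP.
have big : forall n, exists L : seq nat, [/\ uniq L, size L = n & forall j, j \in L -> e <= f j].
  elim=> [|n [L [uL sL hL]]]; first by exists [::]; split => // j; rewrite in_nil.
  have [j [ej jL]] := H' L; exists (j :: L); split.
  - by rewrite /= jL.
  - by rewrite /= sL.
  - by move=> k; rewrite inE => /orP [/eqP ->|/hL].
have s0 : (0 <= \sum_(j <oo) (f j)%:E)%E.
  by apply: nneseries_ge0 => n _; rewrite lee_fin.
set s := (\sum_(j <oo) (f j)%:E)%E in fin s0.
have sE : s = (fine s)%:E by rewrite fineK // ge0_fin_numE.
have fs0 : 0 <= fine s by rewrite -lee_fin -sE.
have [L [uL sL hL]] := big (Num.Def.archi_bound (fine s / e)).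
have := sum_uniq_le_series f0 uL; rewrite -/s sE lee_fin.
have : (size L)%:R * e <= \sum_(j <- L) f j.
  rewrite -sum1_size natr_sum mulr_suml big_seq [X in _ <= X]big_seq; apply: ler_sum => j jL.
  by rewrite mul1r; apply: hL.
move=> h1 h2.
have h3 := archi_boundP (divr_ge0 fs0 (ltW e0)).
rewrite -sL in h3.
have : fine s < (size L)%:R * e by rewrite -ltr_pdivrMr.
lra.
Qed.

End Series.


Section Enum.
Variable R : realType.
Implicit Types (S : rigged R) (s : nat -> circ R).

Lemma enum_Some0 S s x j : enumeration S s -> S x = Some 0%N -> s j <> x.
Proof.
move=> es Sx sj; have := es x; rewrite Sx => -[l [_ sl hl]].
by have := (hl j).1 sj; case: l sl {hl}.
Qed.

Lemma enum_pos S s x : enumeration S s -> S x <> Some 0%N -> exists j, s j = x.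
Proof.
move=> es; have := es x; case: (S x) => [n|].
  move=> [l [_ sl hl]] n0; case: l sl hl => [|j l] sl hl; first by rewrite -sl in n0.
  by exists j; apply/(hl j).2; rewrite inE eqxx.
by move=> h _; have [j _ sj] := h 0%N; exists j.
Qed.

Lemma rone_enum r : enumeration (@rone R) r -> forall j, r j = circ1 R.
Proof.
move=> er j; apply: contrapT => h.
have : rone (r j) = Some 0%N by rewrite /rone; case: pselect.
by move=> h0; exact: (enum_Some0 er h0 erefl).
Qed.

Lemma enum_inj S1 S s1 s : enumeration S1 s1 -> enumeration S s -> rle S1 S ->
  exists phi : nat -> nat, (forall a b, phi a = phi b -> a = b) /\
    forall k, s (phi k) = s1 k.
Proof.
move=> e1 e le.
pose pick (L : seq nat) (k : nat) := xget 0%N [set j | s j = s1 k /\ j \notin L].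
have ex : forall L k, uniq L -> size L = k ->
    (forall i, (i < k)%N -> s (nth 0%N L i) = s1 i) ->
    exists j, s j = s1 k /\ j \notin L.
  move=> L k uL sL hL; set x := s1 k.
  have := le x; have := e x; have := e1 x.
  case: (S x) => [m|]; last first.
    move=> _ h _; have [j jN sj] := h (\max_(j <- L) j).+1.
    exists j; split => //; apply/negP => jL.
    have hj : (j <= \max_(i <- L) i)%N by exact: (leq_bigmax_seq _ jL).
    by have := leq_trans jN hj; rewrite ltnn.
  case: (S1 x) => [m1|] //= [l1 [ul1 sl1 hl1]] [l [ul sl hl]] m1m.
  apply: contrapT => H.
  have lL : forall j, j \in l -> j \in L.
    move=> j jl; apply: contrapT => jL; apply: H; exists j; split.
      exact/(hl j).2.
    exact/negP.
  pose K := [seq i <- iota 0 k | `[< s1 i = x >]].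
  have sub : {subset l <= map (nth 0%N L) K}.
    move=> j jl; have jL := lL j jl.
    apply/mapP; exists (index j L); last by rewrite nth_index.
    rewrite mem_filter mem_iota /= add0n -sL index_mem jL andbT.
    apply/asboolP; have := hL (index j L); rewrite nth_index // -sL index_mem.
    by move=> /(_ jL) <-; apply/(hl j).2.
  have h1 := uniq_leq_size ul sub; rewrite size_map in h1.
  have sub2 : {subset k :: K <= l1}.
    move=> i; rewrite inE => /orP [/eqP ->|]; first exact: (hl1 k).1.
    by rewrite mem_filter => /andP [/asboolP h _]; exact: (hl1 i).1.
  have uK : uniq (k :: K).
    rewrite /= filter_uniq ?iota_uniq // andbT mem_filter mem_iota ltnn.
    by rewrite !andbF.
  have h2 := uniq_leq_size uK sub2; rewrite /= sl1 in h2.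
  move: h1 h2; rewrite sl; move=> h1 h2.
  have := leq_trans h2 m1m; by rewrite ltnNge h1.
pose phis := fix phis n := if n is n'.+1 then rcons (phis n') (pick (phis n') n') else [::].
have P : forall n, [/\ uniq (phis n), size (phis n) = n &
    forall i, (i < n)%N -> s (nth 0%N (phis n) i) = s1 i].
  elim=> [|n [u sz h]]; first by split.
  have [] := xgetPex 0%N (ex _ _ u sz h).
  rewrite -/(pick (phis n) n) => hp1 hp2.
  split; first by rewrite /= rcons_uniq hp2 u.
    by rewrite /= size_rcons sz.
  move=> i; rewrite ltnS leq_eqVlt => /orP [/eqP ->|lti].
    by rewrite /= nth_rcons sz ltnn eqxx.
  by rewrite /= nth_rcons sz lti h.
have pfx : forall n i, (i < n)%N -> nth 0%N (phis n) i = nth 0%N (phis i.+1) i.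
  elim=> [//|n IH] i; rewrite ltnS leq_eqVlt => /orP [/eqP ->//|lti].
  have [_ sz _] := P n.
  by rewrite /= nth_rcons sz lti IH.
exists (fun k => nth 0%N (phis k.+1) k); split; last first.
  by move=> k; have [_ _ h] := P k.+1; apply: h.
have phiE : forall k, nth 0%N (phis k.+1) k = pick (phis k) k.
  by move=> k; have [_ sz _] := P k; rewrite /= nth_rcons sz ltnn eqxx.
have notin : forall k, pick (phis k) k \notin phis k.
  move=> k; have [u sz h] := P k.
  by have [] := xgetPex 0%N (ex _ _ u sz h).
suff H : forall a b, (a < b)%N -> nth 0%N (phis a.+1) a <> nth 0%N (phis b.+1) b.
  move=> a b eab; case: (ltngtP a b) => // hab.
    by have := H _ _ hab.
  by have := H _ _ hab; rewrite eab.
move=> a b ab; rewrite (phiE b) -(pfx b a ab) => eq.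
have [_ sz _] := P b.
have := notin b; rewrite -eq mem_nth //; by rewrite sz.
Qed.

End Enum.


Fixpoint oit (g : nat -> option nat) (j : nat) (n : nat) : option nat :=
  match n with 0 => Some j | n'.+1 => obind g (oit g j n') end.

Lemma oit_add g j n m :
  oit g j (n + m) = obind (fun c => oit g c m) (oit g j n).
Proof.
elim: m => [|m IH]; first by rewrite addn0; case: (oit g j n).
rewrite addnS /= IH; by case: (oit g j n).
Qed.

Lemma oit_None g e m : g e = None -> oit g e m.+1 = None.
Proof. move=> ge; elim: m => [|m IH] /=; first by rewrite ge. by rewrite -/(oit g e m.+1) IH. Qed.

Lemma oit_stop g c a e b e' :
  oit g c a = Some e -> g e = None -> oit g c b = Some e' -> (b <= a)%N.
Proof.
move=> ha ge hb; rewrite leqNgt; apply/negP => ab.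
move: hb; rewrite -(subnKC (ltnW ab)) oit_add ha /=.
move: ab; rewrite -subn_gt0; case: (b - a)%N => // m _; by rewrite oit_None.
Qed.

Lemma oit_pred g j n c :
  oit g j n.+1 = Some c -> exists d, oit g j n = Some d /\ g d = Some c.
Proof. by rewrite /=; case: (oit g j n) => // d h; exists d. Qed.

Lemma oit_inv (f g : nat -> option nat) e n b :
  (forall b c, f b = Some c -> g c = Some b) ->
  oit f e n = Some b -> oit g b n = Some e.
Proof.
move=> fg; elim: n b => [|n IH] b; first by case=> ->.
rewrite [oit f e n.+1]/=.
case h: (oit f e n) => [c|] // fc; rewrite /= in fc.
rewrite -add1n oit_add /= (fg _ _ fc) /=.
exact: IH h.
Qed.

Lemma oit_diff g b n n' j j' :
  oit g b n = Some j -> oit g b n' = Some j' -> (n <= n')%N ->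
  oit g j (n' - n) = Some j'.
Proof.
move=> h h' le; by move: h'; rewrite -{1}(subnKC le) oit_add h.
Qed.

Lemma pmap_oit_uniq g j L :
  (forall a b c, oit g j a = Some c -> oit g j b = Some c -> a = b) ->
  uniq L -> uniq (pmap (oit g j) L).
Proof.
move=> inj; elim: L => [//|x L IH] /= /andP [xL uL].
case h: (oit g j x) => [c|]; last exact: IH.
rewrite /= IH // andbT mem_pmap; apply/negP => /mapP [y yL hy].
by have := inj _ _ _ h (esym hy) => exy; rewrite exy yL in xL.
Qed.

Lemma pmap_oit_S g j n d :
  oit g j n = Some d -> pmap (oit g j) (iota 0 n.+1) = pmap (oit g j) (iota 0 n) ++ [:: d].
Proof. by move=> h; rewrite -addn1 iotaD pmap_cat /= h. Qed.

Lemma mem_pmap_oit g j L b : b \in pmap (oit g j) L -> exists n, oit g j n = Some b.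
Proof. by rewrite mem_pmap => /mapP [n _ h]; exists n. Qed.

Definition inim (f : nat -> nat) j : Prop := exists k, f k = j.
Definition finv (f : nat -> nat) j : nat := xget 0%N [set k | f k = j].

Lemma finvK f j : inim f j -> f (finv f j) = j.
Proof. by move=> h; have := xgetPex 0%N h. Qed.

Lemma finv_f f k : (forall a b, f a = f b -> a = b) -> finv f (f k) = k.
Proof. by move=> inj; apply: inj; apply: finvK; exists k. Qed.

Section Paths.
Variable R : realType.
Variables (s1 t1 s t : nat -> circ R) (phi psi : nat -> nat).
Hypothesis phi_inj : forall a b, phi a = phi b -> a = b.
Hypothesis psi_inj : forall a b, psi a = psi b -> a = b.
Hypothesis hphi : forall k, s (phi k) = s1 k.
Hypothesis hpsi : forall k, t (psi k) = t1 k.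

Definition step j := if pselect (inim psi j) then Some (phi (finv psi j)) else None.
Definition bstep j := if pselect (inim phi j) then Some (psi (finv phi j)) else None.

Lemma step_bstep b c : step b = Some c -> bstep c = Some b.
Proof.
rewrite /step /bstep; case: (pselect (inim psi b)) => hb // h.
have hc : phi (finv psi b) = c by case: h.
clear h.
rewrite -hc.
destruct (pselect (inim phi (phi (finv psi b)))) as [hh|nh]; last by exfalso; apply: nh; exists (finv psi b).
by rewrite finv_f // finvK.
Qed.

Lemma bstep_step b c : bstep c = Some b -> step b = Some c.
Proof.
rewrite /step /bstep; case: (pselect (inim phi c)) => hc // h.
have hb : psi (finv phi c) = b by case: h.
clear h.
rewrite -hb.
destruct (pselect (inim psi (psi (finv phi c)))) as [hh|nh]; last by exfalso; apply: nh; exists (finv phi c).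
by rewrite finv_f // finvK.
Qed.

Lemma step_im b c : step b = Some c -> inim phi c.
Proof. by rewrite /step; case: pselect => // _ [<-]; exists (finv psi b). Qed.

Lemma stepN b : step b = None <-> ~ inim psi b.
Proof. by rewrite /step; case: pselect. Qed.

Definition start j := ~ inim phi j.

Lemma fwd_bwd j n b : oit step j n = Some b -> oit bstep b n = Some j.
Proof. apply: oit_inv => ??; exact: step_bstep. Qed.

Lemma bwd_fwd j n b : oit bstep j n = Some b -> oit step b n = Some j.
Proof. apply: oit_inv => ??; exact: bstep_step. Qed.

Lemma start_not_reached j d c : start j -> oit step c d.+1 <> Some j.
Proof.
move=> sj h; have [e [_ he]] := oit_pred h; apply: sj; exact: step_im he.
Qed.

Lemma start_uniq j j' n n' b : start j -> start j' ->
  oit step j n = Some b -> oit step j' n' = Some b -> j = j'.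
Proof.
move=> sj sj' h h'.
wlog le : j j' n n' sj sj' h h' / (n <= n')%N.
  move=> W; case: (leqP n n') => le; first exact: W h h' le.
  by apply: esym; apply: W h' h (ltnW le).
have := oit_diff (fwd_bwd h) (fwd_bwd h') le.
case: (n' - n)%N => [[]//|d] /bwd_fwd; by move/start_not_reached => /(_ sj).
Qed.

Lemma fwd_inj j a b c : start j -> oit step j a = Some c -> oit step j b = Some c -> a = b.
Proof.
move=> sj ha hb.
wlog le : a b ha hb / (a <= b)%N.
  move=> W; case: (leqP a b) => le; first exact: W.
  by apply: esym; apply: W (ltnW le).
have := oit_diff (fwd_bwd ha) (fwd_bwd hb) le.
move: le; rewrite leq_eqVlt => /orP [/eqP //|ab].
rewrite -(subnKC ab) addSn -addnS addKn => /bwd_fwd.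
by move/start_not_reached => /(_ sj).
Qed.

Lemma bwd_inj e a b c : step e = None ->
  oit bstep e a = Some c -> oit bstep e b = Some c -> a = b.
Proof.
move=> se ha hb; have ha' := bwd_fwd ha; have hb' := bwd_fwd hb.
apply/eqP; rewrite eqn_leq (oit_stop hb' se ha') (oit_stop ha' se hb') //.
Qed.

Definition isend e := exists j n, start j /\ oit step j n = Some e.

Lemma bwd_total e : ~ isend e -> forall n, exists b, oit bstep e n = Some b.
Proof.
move=> ne; elim=> [|n [b hb]]; first by exists e.
rewrite /= hb /=; case h: (bstep b) => [b'|]; first by exists b'.
exfalso; apply: ne; exists b, n; split; last exact: bwd_fwd.
by move: h; rewrite /bstep; case: pselect.
Qed.

Definition fin j := exists n e, oit step j n = Some e /\ step e = None.

Lemma fwd_total j : ~ fin j -> forall n, exists e, oit step j n = Some e.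
Proof.
move=> nf; elim=> [|n [e he]]; first by exists j.
rewrite /= he /=; case h: (step e) => [e'|]; first by exists e'.
by exfalso; apply: nf; exists n, e.
Qed.

Definition c j := cdist (s j) (t j).
Definition c1 k := cdist (s1 k) (t1 k).
Definition w b := c b + (if pselect (inim psi b) then c1 (finv psi b) else 0).

Lemma c_ge0 j : 0 <= c j. Proof. exact: cdist_ge0. Qed.
Lemma c1_ge0 k : 0 <= c1 k. Proof. exact: cdist_ge0. Qed.
Lemma c_le_w j : c j <= w j.
Proof. rewrite /w -{1}(addr0 (c j)) lerD2l; case: pselect => // hh; exact: c1_ge0. Qed.
Lemma w_ge0 j : 0 <= w j. Proof. exact: le_trans (c_ge0 j) (c_le_w j). Qed.

Lemma step_cost b b' : step b = Some b' -> cdist (s b) (s b') <= w b.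
Proof.
rewrite /step /w; case: pselect => // hb h.
have hc : phi (finv psi b) = b' by case: h.
rewrite -hc.
apply: le_trans (cdist_triangle _ (t b) _) _; rewrite lerD2l.
by rewrite hphi -{1}(finvK hb) hpsi /c1 cdistC.
Qed.

Lemma bstep_cost b b' : bstep b = Some b' -> cdist (s b) (t b') + c b' <= w b'.
Proof.
rewrite /bstep /w; case: (pselect (inim phi b)) => // hb h.
have hc : psi (finv phi b) = b' by case: h.
rewrite -hc.
case: (pselect (inim psi (psi (finv phi b)))) => [hh|nh]; last by exfalso; apply: nh; exists (finv phi b).
rewrite finv_f // addrC lerD2l.
by rewrite -{1}(finvK hb) hphi hpsi.
Qed.

Definition pl g j n := pmap (oit g j) (iota 0 n).

Lemma fwd_cost j n e : oit step j n = Some e ->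
  cdist (s j) (s e) <= \sum_(b <- pl step j n) w b.
Proof.
elim: n e => [|n IH] e /=; first by case=> <-; rewrite cdistxx /pl big_nil.
case h: (oit step j n) => [d|] //= hd.
rewrite /pl (pmap_oit_S h) big_cat big_seq1 /=.
apply: le_trans (cdist_triangle _ (s d) _) _.
apply: lerD; [exact: IH | exact: step_cost].
Qed.

Lemma bwd_cost e n b : oit bstep e n = Some b ->
  cdist (t e) (s b) <= \sum_(b' <- pl bstep e n.+1) w b'.
Proof.
elim: n b => [|n IH] b /=.
  by case=> <-; rewrite /pl /= big_seq1 cdistC; exact: c_le_w.
case h: (oit bstep e n) => [d|] //= hd.
have hn : oit bstep e n.+1 = Some b by rewrite /= h.
rewrite /pl (pmap_oit_S hn) big_cat big_seq1 /=.
apply: le_trans (cdist_triangle _ (s d) _) _.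
apply: le_trans (_ : _ <= \sum_(b' <- pl bstep e n.+1) w b' + (cdist (s d) (t b) + c b)) _.
  apply: lerD; first exact: IH.
  rewrite /c [cdist (s b) (t b)]cdistC; exact: cdist_triangle.
exact: (lerD (lexx _) (bstep_cost hd)).
Qed.

Hypothesis Htail : forall e, 0 < e ->
  exists G : seq nat, forall j, e <= cdist (s j) (circ1 R) -> j \in G.

Lemma tail_small (g : nat -> nat) e : 0 < e ->
  (forall a b, g a = g b -> a = b) -> exists n, cdist (s (g n)) (circ1 R) < e.
Proof.
move=> e0 ginj; have [G hG] := Htail e0; have [n hn] := pigeon G ginj.
exists n; rewrite ltNge; apply/negP => h; by rewrite (hG _ h) in hn.
Qed.

Definition endof j := xget 0%N [set e | exists n, oit step j n = Some e /\ step e = None].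

Definition u i := if odd i then circ1 R
  else if pselect (inim phi i./2) then circ1 R else s i./2.
Definition v i := if odd i then
    (if pselect (step i./2 = None /\ ~ isend i./2) then t i./2 else circ1 R)
  else (if pselect (start i./2 /\ fin i./2) then t (endof i./2) else circ1 R).
Definition Pslot i b := if odd i then
    (step i./2 = None /\ ~ isend i./2 /\ exists n, oit bstep i./2 n = Some b)
  else (start i./2 /\ exists n, oit step i./2 n = Some b).

Lemma slot_bound e i : 0 < e -> exists L, [/\ uniq L,
  (forall b, b \in L -> Pslot i b) & cdist (u i) (v i) <= \sum_(b <- L) w b + e].
Proof.
move=> e0; rewrite /u /v /Pslot; set j := i./2; case: (odd i).
  case: pselect => [[sj nj]|nh]; last first.
    by exists [::]; split => //; rewrite cdistxx big_nil add0r ltW.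
  have [g hg] := choice (bwd_total nj).
  have ginj : forall a b, g a = g b -> a = b.
    by move=> a b gab; apply: (bwd_inj sj (hg a)); rewrite gab hg.
  have [n hn] := tail_small e0 ginj.
  exists (pl bstep j n.+1); split.
  - apply: pmap_oit_uniq; last exact: iota_uniq.
    by move=> a b c ha hb; exact: bwd_inj sj ha hb.
  - move=> b /mem_pmap_oit [m hm]; split => //; split => //; by exists m.
  - rewrite cdistC; apply: le_trans (cdist_triangle _ (s (g n)) _) _.
    by apply: lerD; [exact: bwd_cost | exact: ltW].
case: pselect => [hj|hj].
  case: pselect => [[sj hh]|hh]; first by exfalso.
  by exists [::]; split => //; rewrite cdistxx big_nil add0r ltW.
case: pselect => [[sj fj]|nf].
  have [m [hm sm]] : exists n, oit step j n = Some (endof j) /\ step (endof j) = None.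
    by apply: (xgetPex 0%N (P := [set e | exists n, oit step j n = Some e /\ step e = None])); move: fj => [n [e' h]]; exists e', n.
  exists (pl step j m.+1); split.
  - apply: pmap_oit_uniq; last exact: iota_uniq.
    by move=> a b c ha hb; exact: fwd_inj hj ha hb.
  - move=> b /mem_pmap_oit [k hk]; split => //; by exists k.
  - apply: le_trans (cdist_triangle _ (s (endof j)) _) _.
    rewrite /pl (pmap_oit_S hm) big_cat big_seq1 -addrA.
    apply: lerD; first exact: fwd_cost.
    by rewrite -[c _ <= _]/(c (endof j) <= _) ler_wpDr ?(ltW e0) // c_le_w.
have nfj : ~ fin j by move=> fj; apply: nf.
have [g hg] := choice (fwd_total nfj).
have ginj : forall a b, g a = g b -> a = b.
  by move=> a b gab; apply: (fwd_inj hj (hg a)); rewrite gab hg.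
have [n hn] := tail_small e0 ginj.
exists (pl step j n); split.
- apply: pmap_oit_uniq; last exact: iota_uniq.
  by move=> a b c ha hb; exact: fwd_inj hj ha hb.
- move=> b /mem_pmap_oit [k hk]; split => //; by exists k.
- apply: le_trans (cdist_triangle _ (s (g n)) _) _.
  by apply: lerD; [exact: fwd_cost | exact: ltW].
Qed.

Lemma half_eq i i' : odd i = odd i' -> i./2 = i'./2 -> i = i'.
Proof. by move=> o h; rewrite -(odd_double_half i) -(odd_double_half i') o h. Qed.

Lemma slot_disj i i' b : Pslot i b -> Pslot i' b -> i = i'.
Proof.
rewrite /Pslot; case oi: (odd i); case oi': (odd i').
- move=> [sj [nj [n hn]]] [sj' [nj' [n' hn']]].
  have h := bwd_fwd hn; have h' := bwd_fwd hn'.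
  have nn : n = n' by apply/eqP; rewrite eqn_leq (oit_stop h' sj' h) (oit_stop h sj h').
  apply: half_eq; first by rewrite oi oi'.
  by move: h h'; rewrite nn => -> [].
- move=> [sj [nj [n hn]]] [sj' [n' hn']]; exfalso; apply: nj.
  exists i'./2, (n' + n)%N; split => //.
  by rewrite oit_add hn' /=; exact: bwd_fwd.
- move=> [sj' [n' hn']] [sj [nj [n hn]]]; exfalso; apply: nj.
  exists i./2, (n' + n)%N; split => //.
  by rewrite oit_add hn' /=; exact: bwd_fwd.
- move=> [sj [n hn]] [sj' [n' hn']]; apply: half_eq; first by rewrite oi oi'.
  exact: start_uniq sj sj' hn hn'.
Qed.

Lemma slots_sum e N : 0 < e -> exists F, [/\ uniq F,
  (forall b, b \in F -> exists2 i, (i < N)%N & Pslot i b) &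
  \sum_(0 <= i < N) cdist (u i) (v i) <= \sum_(b <- F) w b + N%:R * e].
Proof.
move=> e0; elim: N => [|N [F [uF hF sF]]].
  by exists [::]; split => //; rewrite big_geq // big_nil mul0r addr0.
have [L [uL hL sL]] := slot_bound N e0.
exists (F ++ L); split.
- rewrite cat_uniq uF uL andbT; apply/hasPn => b bL; apply/negP => bF.
  have [i iN hi] := hF b bF; have := slot_disj hi (hL b bL).
  by move=> eiN; rewrite eiN ltnn in iN.
- move=> b; rewrite mem_cat => /orP [/hF [i iN hi]|bL].
    by exists i => //; exact: ltnW.
  by exists N => //; exact: hL.
- rewrite big_nat_recr //= big_cat -natr1 /=.
  move: sF sL; set a := \sum_(0 <= i < N) _; set b := \sum_(b <- F) _.
  set c' := \sum_(b <- L) _; set d := cdist _ _; move=> h1 h2.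
  rewrite mulrDl mul1r; lra.
Qed.

Lemma sum_w_le F : uniq F ->
  ((\sum_(b <- F) w b)%:E <= \sum_(j <oo) (c j)%:E + \sum_(k <oo) (c1 k)%:E)%E.
Proof.
move=> uF; rewrite /w big_split /= EFinD; apply: leeD.
  exact: sum_uniq_le_series (@c_ge0) uF.
have -> : \sum_(b <- F) (if pselect (inim psi b) then c1 (finv psi b) else 0) =
    \sum_(b <- F | `[< inim psi b >]) c1 (finv psi b).
  rewrite [RHS]big_mkcond; apply: eq_bigr => b _.
  by case: pselect => h; [rewrite asboolT | rewrite asboolF].
rewrite -big_filter -(big_map (finv psi) xpredT).
apply: sum_uniq_le_series (@c1_ge0) _.
rewrite map_inj_in_uniq ?filter_uniq // => a b.
rewrite !mem_filter => /andP [/asboolP ha _] /andP [/asboolP hb _] e.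
by rewrite -(finvK ha) -(finvK hb) e.
Qed.

Lemma core_bound :
  (\sum_(i <oo) (cdist (u i) (v i))%:E <=
   \sum_(j <oo) (c j)%:E + \sum_(k <oo) (c1 k)%:E)%E.
Proof.
apply: series_le_bound => [i|N]; first exact: cdist_ge0.
apply/lee_addgt0Pr => e e0.
have d0 : 0 < e / N.+1%:R by rewrite divr_gt0 // ltr0Sn.
have [F [uF _ sF]] := slots_sum N d0.
have Ne : N%:R * (e / N.+1%:R) <= e.
  rewrite mulrA ler_pdivrMr ?ltr0Sn // -natr1 mulrDr mulr1 mulrC lerDl ltW //.
apply: le_trans (_ : ((\sum_(b <- F) w b) + N%:R * (e / N.+1%:R))%:E <= _)%E.
  by rewrite lee_fin.
by rewrite EFinD leeD // ?sum_w_le // lee_fin.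
Qed.

End Paths.


Section Enums.
Variable R : realType.

Lemma filter_compl_size (A1 : rigged R) (a1 a : nat -> circ R) (f : nat -> nat)
  x m m1 (l : seq nat) :
  enumeration A1 a1 -> (forall p q, f p = f q -> p = q) ->
  (forall k, a (f k) = a1 k) -> A1 x = Some m1 -> uniq l -> size l = m ->
  (forall j, a j = x <-> j \in l) ->
  size [seq j <- l | ~~ `[< inim f j >]] = (m - m1)%N.
Proof.
move=> e1 finj hf A1x ul sl hl.
have := e1 x; rewrite A1x => -[l1 [ul1 sl1 hl1]].
have pe : perm_eq [seq j <- l | `[< inim f j >]] (map f l1).
  apply: uniq_perm; first by rewrite filter_uniq.
    by rewrite map_inj_uniq // => p q /finj.
  move=> j; rewrite mem_filter; apply/andP/mapP.
    move=> [/asboolP [k hk] jl]; exists k => //.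
    apply/(hl1 k).1; rewrite -hf hk; exact/(hl j).2.
  move=> [k kl1 ->]; split; first by apply/asboolP; exists k.
  apply/(hl (f k)).1; rewrite hf; exact/(hl1 k).2.
have h1 := perm_size pe; rewrite size_map sl1 size_filter in h1.
have := count_predC (fun j => `[< inim f j >]) l.
rewrite h1 sl size_filter => <-; by rewrite addKn.
Qed.

Lemma rsub_enum_u (S1 S : rigged R) (s1 s : nat -> circ R) (phi : nat -> nat) :
  enumeration S1 s1 -> enumeration S s -> rle S1 S ->
  (forall x, x <> circ1 R -> S x <> None) ->
  (forall p q, phi p = phi q -> p = q) -> (forall k, s (phi k) = s1 k) ->
  enumeration (rsub S S1) (u s phi).
Proof.
move=> e1 e le hS pinj hp x; rewrite /rsub.
case: pselect => [hx|nx] /=.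
  move=> N; exists N.*2.+1; first by rewrite -addnn -addSn leq_addl.
  by rewrite /u /= odd_double hx.
case Sx: (S x) (hS x nx) => [m|] // _.
case S1x: (S1 x) (le x) => [m1|]; rewrite Sx //= => m1m.
have := e x; rewrite Sx => -[l [ul sl hl]].
exists (map double [seq j <- l | ~~ `[< inim phi j >]]); split.
- by rewrite map_inj_uniq ?filter_uniq //; exact: double_inj.
- by rewrite size_map (filter_compl_size e1 pinj hp S1x ul sl hl).
- move=> i; split.
    rewrite /u; case oi: (odd i) => //; first by move=> h; exfalso; apply: nx; rewrite -h.
    case: pselect => [hh h|hi si]; first by exfalso; apply: nx; rewrite -h.
    apply/mapP; exists i./2; last by rewrite -{1}(odd_double_half i) oi.
    rewrite mem_filter; apply/andP; split; last exact/(hl _).1.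
    by apply/negP => /asboolP.
  move=> /mapP [j]; rewrite mem_filter => /andP [hj jl] ->.
  rewrite /u odd_double half_double; case: pselect => [h|hh].
    by move: hj => /negP; case; apply/asboolP.
  exact/(hl j).2.
Qed.

Lemma endofP (phi psi : nat -> nat) j : fin phi psi j ->
  exists n, oit (step phi psi) j n = Some (endof phi psi j) /\ step phi psi (endof phi psi j) = None.
Proof.
move=> [n [e h]].
by apply: (xgetPex 0%N (P := [set e | exists n, oit (step phi psi) j n = Some e /\ step phi psi e = None])); exists e, n.
Qed.

Lemma rsub_enum_v (T1 T : rigged R) (t1 t : nat -> circ R) (phi psi : nat -> nat) :
  enumeration T1 t1 -> enumeration T t -> rle T1 T ->
  (forall x, x <> circ1 R -> T x <> None) ->
  (forall p q, phi p = phi q -> p = q) -> (forall p q, psi p = psi q -> p = q) ->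
  (forall k, t (psi k) = t1 k) ->
  enumeration (rsub T T1) (v t phi psi).
Proof.
move=> e1 e le hT pinj qinj hq x; rewrite /rsub.
case: pselect => [hx|nx] /=.
  move=> N; have [k hk] := pigeon (iota 0 N) pinj.
  exists (phi k).*2.
    rewrite mem_iota /= add0n -leqNgt in hk.
    by apply: leq_trans hk _; rewrite -addnn leq_addr.
  rewrite /v odd_double half_double; case: pselect => [[sj fj]|nh].
    by exfalso; apply: sj; exists k.
  by rewrite hx.
case Tx: (T x) (hT x nx) => [m|] // _.
case T1x: (T1 x) (le x) => [m1|]; rewrite Tx //= => m1m.
have := e x; rewrite Tx => -[l [ul sl hl]].
set E := [seq j <- l | ~~ `[< inim psi j >]].
pose sto e := xget 0%N [set j | start phi j /\ exists n, oit (step phi psi) j n = Some e].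
have stoP : forall e, isend phi psi e ->
    start phi (sto e) /\ exists n, oit (step phi psi) (sto e) n = Some e.
  move=> e0 [j [n [sj hj]]].
  by apply: (xgetPex 0%N (P := [set j | start phi j /\ exists n, oit (step phi psi) j n = Some e0])); exists j; split => //; exists n.
have stepE : forall e, e \in E -> step phi psi e = None.
  move=> e0; rewrite mem_filter => /andP [/negP h _]; apply/stepN => h'.
  by apply: h; apply/asboolP.
pose g e := if pselect (isend phi psi e) then (sto e).*2 else e.*2.+1.
exists (map g E); split.
- rewrite map_inj_in_uniq ?filter_uniq // => a b aE bE; rewrite /g.
  case: pselect => ha; case: pselect => hb.
  + move/double_inj => eab.
    have [sa [n ha']] := stoP a ha; have [sb [n' hb']] := stoP b hb.
    rewrite eab in ha'.
    have nn : n = n'.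
      by apply/eqP; rewrite eqn_leq (oit_stop hb' (stepE b bE) ha') (oit_stop ha' (stepE a aE) hb').
    by move: ha' hb'; rewrite nn => -> [].
  + by move/(congr1 odd); rewrite /= !odd_double.
  + by move/(congr1 odd); rewrite /= !odd_double.
  + by move=> [] /double_inj.
- by rewrite size_map (filter_compl_size e1 qinj hq T1x ul sl hl).
- move=> i; have hi := odd_double_half i; split.
    rewrite /v; case oi: (odd i).
      case: pselect => [[sj nj] tj|nh h]; last by exfalso; apply: nx; rewrite -h.
      apply/mapP; exists i./2.
        rewrite mem_filter; apply/andP; split; last exact/(hl _).1.
        by apply/negP => /asboolP h; exact: ((stepN phi psi _).1 sj h).
      rewrite /g; case: pselect => // he; rewrite oi in hi.
      by rewrite -{1}hi.
    case: pselect => [[sj fj] h|nh h]; last by exfalso; apply: nx; rewrite -h.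
    have [n [hn sn]] := endofP fj.
    set e0 := endof phi psi i./2 in hn sn h.
    apply/mapP; exists e0.
      rewrite mem_filter; apply/andP; split; last exact/(hl _).1.
      by apply/negP => /asboolP hh; exact: ((stepN phi psi _).1 sn hh).
    have ie : isend phi psi e0 by exists i./2, n.
    rewrite /g; case: pselect => // he.
    have [ss [n' hs]] := stoP e0 he.
    rewrite (start_uniq pinj qinj ss sj hs hn).
    by rewrite oi in hi; rewrite -{1}hi.
  move=> /mapP [e0 eE ei]; rewrite /g in ei; move: ei.
  case: pselect => he ei.
    have [ss [n hs]] := stoP e0 he.
    rewrite ei /v odd_double half_double; case: pselect => [[sj fj]|nh].
      have [n' [hn' sn']] := endofP fj.
      have nn : n = n'.
        by apply/eqP; rewrite eqn_leq (oit_stop hn' sn' hs) (oit_stop hs (stepE _ eE) hn').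
      move: hn'; rewrite -nn hs => -[<-]; apply/(hl _).2.
      by move: eE; rewrite mem_filter => /andP [].
    by exfalso; apply: nh; split => //; exists n, e0; split => //; exact: stepE.
  rewrite ei /v /= odd_double /= uphalf_double.
  case: pselect => [hh|nh].
    by apply/(hl _).2; move: eE; rewrite mem_filter => /andP [].
  by exfalso; apply: nh; split => //; exact: stepE.
Qed.

End Enums.


Section Final.
Variable R : realType.

Lemma in_Soo_None (S : rigged R) x : in_Soo S -> x <> circ1 R -> S x <> None.
Proof.
move=> [_ _ h] nx; have [r r0 [_ h2]] := h x nx; apply: h2; by rewrite cdistxx.
Qed.

Lemma tail_transfer (S : rigged R) (s s' : nat -> circ R) :
  enumeration S s -> (forall x, x <> circ1 R -> S x <> None) ->
  forall F : seq nat, exists G : seq nat, forall j,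
    (exists j', [/\ j' \in F, s' j' = s j & s j <> circ1 R]) -> j \in G.
Proof.
move=> es hS; elim=> [|a F [G hG]].
  by exists [::] => j [j' [] ].
case: (pselect (s' a = circ1 R)) => ha.
  exists G => j [j' [] ]; rewrite inE => /orP [/eqP ->|jF] e1 e2.
    by exfalso; apply: e2; rewrite -e1.
  by apply: hG; exists j'.
case Sa: (S (s' a)) (hS _ ha) => [m|] // _.
have := es (s' a); rewrite Sa => -[l [_ _ hl]].
exists (l ++ G) => j [j' [] ]; rewrite inE mem_cat => /orP [/eqP ->|jF] e1 e2.
  by apply/orP; left; apply/(hl j).1; rewrite e1.
by apply/orP; right; apply: hG; exists j'.
Qed.

Lemma tail_of_S1 (S : rigged R) (s : nat -> circ R) : in_S1 S -> enumeration S s ->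
  forall e, 0 < e -> exists G : seq nat, forall j, e <= cdist (s j) (circ1 R) -> j \in G.
Proof.
move=> [hSoo fin] es e e0.
have hS := fun x => @in_Soo_None S x hSoo.
have [y [s' [r [es' er ->]]] yfin] := ereal_inf_lt fin.
have [F hF] := finite_tail (fun j => cdist_ge0 (s' j) (r j)) yfin e0.
have [G hG] := tail_transfer s' es hS F.
exists G => j ej; apply: hG.
have nj : s j <> circ1 R by move=> h; move: ej; rewrite h cdistxx; lra.
have [j' hj'] : exists j', s' j' = s j.
  apply: (enum_pos es') => h0.
  by apply: (enum_Some0 es h0 (erefl (s j))).
exists j'; split => //; apply: hF; by rewrite (rone_enum er) hj'.
Qed.

Lemma inf_add_le (X : \bar R) (A B : set (\bar R)) :
  (forall a, A a -> (0 <= a)%E) -> (forall b, B b -> (0 <= b)%E) ->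
  (forall a b, A a -> B b -> (X <= a + b)%E) ->
  (X <= ereal_inf A + ereal_inf B)%E.
Proof.
move=> A0 B0 H.
have iA : (0 <= ereal_inf A)%E by apply/ereal_infP.
have iB : (0 <= ereal_inf B)%E by apply/ereal_infP.
case eA: (ereal_inf A) => [al| |]; last by rewrite eA in iA.
  2: by rewrite addye ?leey // gt_eqF // (lt_le_trans _ iB) // ltNye.
case eB: (ereal_inf B) => [be| |]; last by rewrite eB in iB.
  2: by rewrite addey ?leey.
apply/lee_addgt0Pr => e e0.
have e2 : 0 < e / 2 by rewrite divr_gt0.
have fA : ereal_inf A \is a fin_num by rewrite eA.
have fB : ereal_inf B \is a fin_num by rewrite eB.
have [a Aa ha] := lb_ereal_inf_adherent e2 fA.
have [b Bb hb] := lb_ereal_inf_adherent e2 fB.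
rewrite eA in ha; rewrite eB in hb.
apply: le_trans (H a b Aa Bb) _.
apply: le_trans (leeD (ltW ha) (ltW hb)) _.
rewrite -!EFinD lee_fin; lra.
Qed.

End Final.

Theorem mainTheorem6 (R : realType) (S1 S T1 T : rigged R) :
  in_S1 S1 -> in_S1 S -> in_S1 T1 -> in_S1 T ->
  rle S1 S -> rle T1 T ->
  (rdist (rsub S S1) (rsub T T1) <= rdist S1 T1 + rdist S T)%E.
Proof.
move=> h1 h h1' h' le1 le2.
apply: inf_add_le.
- move=> a [s1 [t1 [_ _ ->]]]; apply: nneseries_ge0 => n _ _; rewrite lee_fin; exact: cdist_ge0.
- move=> a [s1 [t1 [_ _ ->]]]; apply: nneseries_ge0 => n _ _; rewrite lee_fin; exact: cdist_ge0.
move=> a b [s1 [t1 [e1 f1 ->]]] [s [t [e f ->]]].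
have [phi [pinj hp]] := enum_inj e1 e le1.
have [psi [qinj hq]] := enum_inj f1 f le2.
have hS := fun x => @in_Soo_None R S x h.1.
have hT := fun x => @in_Soo_None R T x h'.1.
have tl := tail_of_S1 h e.
apply: le_trans (_ : _ <= \sum_(i <oo) (cdist (u s phi i) (v t phi psi i))%:E)%E _.
  apply: ereal_inf_lbound; exists (u s phi), (v t phi psi); split => //.
    exact: rsub_enum_u e1 e le1 hS pinj hp.
  exact: rsub_enum_v f1 f le2 hT pinj qinj hq.
rewrite addeC; exact: (core_bound pinj qinj hp hq tl).
Qed.
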